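(* Let $(c_i)_{i\ge0}$, $(b'_i)_{i\ge0}$, $(c'_i)_{i\ge0}$ be sequences of non-negative reals and let $L,R>0$ and $0<\epsilon<1$. Suppose that for all $i$: $b'_{i+1}\le b'_i+L(b'_ic_i+c'_i)$, $c'_{i+1}\le L(b'_ic_i+c'_i)c_i$, $c_{i+1}\le Rc_i^2$, and $c_i\le c'_i$; and that there is an index $I$ with $c_i\le\epsilon^{2^{(i-I)}}$ for all $i\ge I$. Then: (a) $(b'_i)$ is bounded; (b) there is $R'>0$ with $c'_{i+1}\le R'(c'_i)^2$ for all $i$; (c) there is an index $I'\ge I$ with $c'_i\le\epsilon^{2^{(i-I')}}$ for all $i\ge I'$. *)

(* Defs.v *)
From Stdlib Require Import Reals Lra Lia.

(* Main.v *)
Require Import Defs.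
From Stdlib Require Import Reals Lra Lia.
Open Scope R_scope.

Lemma pow_le1' (x : R) (d : nat) : 0 <= x <= 1 -> x ^ d <= 1.
Proof.
  intros Hx; induction d as [|d IH]; simpl; [lra|].
  assert (0 <= x ^ d) by (apply pow_le; lra).
  nra.
Qed.

Lemma pow_mono_dec (x : R) (a d : nat) : 0 <= x <= 1 -> x ^ (a + d) <= x ^ a.
Proof.
  intros Hx. rewrite pow_add.
  assert (0 <= x ^ a) by (apply pow_le; lra).
  assert (x ^ d <= 1) by (apply pow_le1'; lra).
  nra.
Qed.

Lemma two_pow_ge (k : nat) : (k + 1 <= 2 ^ k)%nat.
Proof. induction k as [|k IH]; simpl; lia. Qed.

Fixpoint mx (f : nat -> R) (n : nat) : R :=
  match n with 0 => f 0%nat | S k => Rmax (mx f k) (f (S k)) end.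

Lemma mx_ge (f : nat -> R) (n i : nat) : (i <= n)%nat -> f i <= mx f n.
Proof.
  induction n as [|n IH]; intros Hi.
  - replace i with 0%nat by lia. simpl; lra.
  - simpl. destruct (Nat.eq_dec i (S n)) as [->|Hne].
    + apply Rmax_r.
    + eapply Rle_trans; [apply IH; lia | apply Rmax_l].
Qed.

Theorem lemma5p3 (c b' c' : nat -> R) (L Rc eps : R) (I : nat) :
  (forall i, 0 <= c i) -> (forall i, 0 <= b' i) -> (forall i, 0 <= c' i) ->
  0 < L -> 0 < Rc -> 0 < eps -> eps < 1 ->
  (forall i, b' (S i) <= b' i + L * (b' i * c i + c' i)) ->
  (forall i, c' (S i) <= L * (b' i * c i + c' i) * c i) ->
  (forall i, c (S i) <= Rc * (c i) ^ 2) ->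
  (forall i, c i <= c' i) ->
  (forall i, (I <= i)%nat -> c i <= eps ^ (2 ^ (i - I))%nat) ->
  (exists B, forall i, Rabs (b' i) <= B) /\
  (exists R', 0 < R' /\ forall i, c' (S i) <= R' * (c' i) ^ 2) /\
  (exists I', (I <= I')%nat /\
     forall i, (I' <= i)%nat -> c' i <= eps ^ (2 ^ (i - I'))%nat).
Proof.
  intros Hc Hb Hc' HL HR He0 He1 Hb1 Hc'1 Hc1 Hcc Hdec.
  set (e := eps) in *.
  assert (Hepow : forall n, 0 < e ^ n <= 1).
  { intro n; split; [apply pow_lt; lra | apply pow_le1'; lra]. }
  destruct (pow_lt_1_zero e ltac:(rewrite Rabs_right; lra) ((1 - e) / (4 * L)))
    as [m Hm].
  { apply Rdiv_lt_0_compat; lra. }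
  set (th := e ^ (m + 1)).
  assert (Hth : 4 * L * th < 1 - e).
  { assert (H1 : Rabs (e ^ m) < (1 - e) / (4 * L)) by (apply Hm; lia).
    rewrite Rabs_right in H1 by (left; apply Hepow).
    assert (th <= e ^ m) by (unfold th; apply pow_mono_dec; lra).
    assert (4 * L * ((1 - e) / (4 * L)) = 1 - e) by (field; lra).
    nra. }
  assert (Hth0 : 0 < th) by (apply Hepow).
  set (N := (I + m)%nat).
  assert (Hgeo : forall n, c (N + n)%nat <= th * e ^ n).
  { intro n. eapply Rle_trans; [apply Hdec; unfold N; lia|].
    replace (N + n - I)%nat with (m + n)%nat by (unfold N; lia).
    replace (2 ^ (m + n))%nat with ((m + n + 1) + (2 ^ (m + n) - (m + n + 1)))%nat
      by (pose proof (two_pow_ge (m + n)); lia).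
    eapply Rle_trans; [apply pow_mono_dec; lra|].
    unfold th. rewrite <- pow_add. replace (m + n + 1)%nat with (m + 1 + n)%nat by lia.
    lra. }
  set (K := 2 * L).
  set (z := fun n => b' (N + n)%nat + K * c' (N + n)%nat).
  assert (Hz0 : forall n, 0 <= z n).
  { intro n; unfold z, K. pose proof (Hb (N + n)%nat); pose proof (Hc' (N + n)%nat). nra. }
  assert (Hstep : forall n, z (S n) <= (1 + 2 * L * th * e ^ n) * z n).
  { intro n. unfold z. rewrite Nat.add_succ_r.
    set (c0 := c (N + n)%nat). set (b0 := b' (N + n)%nat). set (d0 := c' (N + n)%nat).
    pose proof (Hb1 (N + n)%nat) as E1. pose proof (Hc'1 (N + n)%nat) as E2.
    fold c0 b0 d0 in E1, E2.
    set (t := th * e ^ n).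
    assert (Hc0t : c0 <= t) by apply Hgeo.
    assert (Ht : t <= th) by (unfold t; pose proof (Hepow n); nra).
    assert (c00 : 0 <= c0) by apply Hc.
    assert (b00 : 0 <= b0) by apply Hb.
    assert (d00 : 0 <= d0) by apply Hc'.
    assert (HLc : L * c0 <= 1 / 4).
    { assert (L * c0 <= L * th) by (apply Rmult_le_compat_l; lra). lra. }
    assert (H2 : 2 * L * c0 ^ 2 <= c0) by nra.
    assert (Hx1 : 0 <= b0 * (L * (2 * t - c0 - 2 * L * c0 ^ 2))).
    { apply Rmult_le_pos; [lra|]. apply Rmult_le_pos; lra. }
    assert (Hx2 : 0 <= d0 * (L - 2 * L * L * c0 + 4 * L * L * t)).
    { apply Rmult_le_pos; [lra|]. nra. }
    assert (E3 : K * c' (S (N + n)) <= K * (L * (b0 * c0 + d0) * c0)).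
    { apply Rmult_le_compat_l; unfold K; lra. }
    replace (2 * L * th * e ^ n) with (2 * L * t) by (unfold t; ring).
    unfold K in *. lra. }
  assert (Hinv : forall n, z n <= z 0%nat * (2 - e ^ n)).
  { induction n as [|n IH].
    - simpl; lra.
    - eapply Rle_trans; [apply Hstep|].
      pose proof (Hepow n). pose proof (Hz0 n). pose proof (Hz0 0%nat).
      set (x := e ^ n) in *. set (a := 2 * L * th) in *.
      assert (Ha : 2 * a <= 1 - e) by (unfold a; lra).
      assert (Ha0 : 0 <= a) by (unfold a; nra).
      simpl. fold x.
      assert (S1 : (1 + a * x) * z n <= (1 + a * x) * (z 0%nat * (2 - x))).
      { apply Rmult_le_compat_l; [nra | lra]. }
      assert (S2 : (1 + a * x) * (2 - x) <= 2 - e * x) by nra.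
      nra. }
  set (z0 := z 0%nat) in *.
  assert (Hzb : forall n, z n <= 2 * z0).
  { intro n; pose proof (Hinv n); pose proof (Hepow n).
    assert (0 <= z0 * e ^ n) by (apply Rmult_le_pos; [apply Hz0 | lra]).
    lra. }
  assert (Hbt : forall n, b' (N + n)%nat <= 2 * z0).
  { intro n; pose proof (Hzb n); unfold z in *; pose proof (Hc' (N + n)%nat);
    unfold K in *; nra. }
  assert (Hdt : forall n, c' (N + n)%nat <= z0 / L).
  { intro n; pose proof (Hzb n); unfold z in *; pose proof (Hb (N + n)%nat).
    apply Rmult_le_reg_l with L; [lra|].
    replace (L * (z0 / L)) with z0 by (field; lra). unfold K in *. lra. }
  set (B := Rmax (mx b' N) (2 * z0)).
  assert (HB : forall i, b' i <= B).
  { intro i. destruct (Nat.le_gt_cases i N) as [Hi|Hi].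
    - eapply Rle_trans; [apply mx_ge; exact Hi| apply Rmax_l].
    - replace i with (N + (i - N))%nat by lia.
      eapply Rle_trans; [apply Hbt| apply Rmax_r]. }
  assert (HB0 : 0 <= B) by (pose proof (HB 0%nat); pose proof (Hb 0%nat); lra).
  set (R' := L * (B + 1)).
  assert (HR' : 0 < R') by (unfold R'; nra).
  assert (Hquad : forall i, c' (S i) <= R' * (c' i) ^ 2).
  { intro i. eapply Rle_trans; [apply Hc'1|].
    pose proof (HB i); pose proof (Hcc i); pose proof (Hc i); pose proof (Hb i);
    pose proof (Hc' i).
    assert (b' i * c i <= B * c' i).
    { apply Rmult_le_compat; lra. }
    assert (L * (b' i * c i + c' i) <= L * (B * c' i + c' i)) by nra.
    assert (L * (b' i * c i + c' i) * c i <= L * (B * c' i + c' i) * c' i).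
    { assert (0 <= b' i * c i) by (apply Rmult_le_pos; lra).
      apply Rmult_le_compat; try lra. apply Rmult_le_pos; lra. }
    unfold R'. replace (L * (B + 1) * c' i ^ 2) with (L * (B * c' i + c' i) * c' i) by ring. lra. }
  split; [exists B; intro i; rewrite Rabs_right; [apply HB | apply Rle_ge, Hb]|].
  split; [exists R'; split; assumption|].
  set (P := L * (B + z0 / L)).
  assert (HP0 : 0 <= P).
  { unfold P. pose proof (Hdt 0%nat); pose proof (Hc' (N + 0)%nat). nra. }
  assert (Hct : forall n, c' (N + S n)%nat <= P * e ^ n).
  { intro n. rewrite Nat.add_succ_r. eapply Rle_trans; [apply Hc'1|].
    pose proof (HB (N + n)%nat); pose proof (Hdt n); pose proof (Hgeo n).
    pose proof (Hc (N + n)%nat); pose proof (Hb (N + n)%nat); pose proof (Hc' (N + n)%nat).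
    pose proof (Hepow n).
    assert (th <= 1) by (unfold th; apply Hepow).
    set (c0 := c (N + n)%nat) in *.
    assert (c0 <= e ^ n) by nra.
    assert (c0 <= 1) by lra.
    assert (b' (N + n)%nat * c0 <= B) by nra.
    assert (L * (b' (N + n)%nat * c0 + c' (N + n)%nat) <= P) by (unfold P; nra).
    assert (0 <= b' (N + n)%nat * c0) by (apply Rmult_le_pos; lra).
    apply Rmult_le_compat; try lra. apply Rmult_le_pos; lra. }
  set (R2 := Rmax R' 1).
  assert (HR2 : 1 <= R2) by apply Rmax_r.
  assert (HR2' : R' <= R2) by apply Rmax_l.
  destruct (pow_lt_1_zero e ltac:(rewrite Rabs_right; lra) (e / (R2 * (P + 1))))
    as [n0 Hn0].
  { apply Rdiv_lt_0_compat; nra. }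
  set (J := (N + S n0)%nat).
  assert (HJ : R2 * c' J <= e).
  { assert (H1 : Rabs (e ^ n0) < e / (R2 * (P + 1))) by (apply Hn0; lia).
    rewrite Rabs_right in H1 by (left; apply Hepow).
    pose proof (Hct n0). fold J in H.
    assert (R2 * (P + 1) * (e / (R2 * (P + 1))) = e) by (field; lra).
    assert (R2 * (P + 1) * e ^ n0 <= e).
    { assert (0 < R2 * (P + 1)) by nra.
      assert (R2 * (P + 1) * e ^ n0 <= R2 * (P + 1) * (e / (R2 * (P + 1)))) by
        (apply Rmult_le_compat_l; lra). lra. }
    pose proof (Hepow n0).
    assert (R2 * c' J <= R2 * (P * e ^ n0)) by (apply Rmult_le_compat_l; lra).
    assert (R2 * (P * e ^ n0) <= R2 * (P + 1) * e ^ n0) by nra.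
    lra. }
  assert (Hk : forall k, R2 * c' (J + k)%nat <= e ^ (2 ^ k)%nat).
  { induction k as [|k IH].
    - rewrite Nat.add_0_r. simpl. lra.
    - rewrite Nat.add_succ_r.
      pose proof (Hquad (J + k)%nat). pose proof (Hc' (J + k)%nat).
      pose proof (Hc' (S (J + k))).
      assert (0 <= R2 * c' (J + k)%nat) by nra.
      replace (2 ^ S k)%nat with (2 ^ k + 2 ^ k)%nat by (simpl; lia).
      rewrite pow_add.
      assert (R2 * c' (S (J + k)) <= (R2 * c' (J + k)%nat) * (R2 * c' (J + k)%nat)).
      { assert (c' (S (J + k)) <= R2 * c' (J + k)%nat ^ 2).
        { eapply Rle_trans; [eassumption|]. apply Rmult_le_compat_r; [nra|lra]. }
        simpl in *. nra. }
      eapply Rle_trans; [eassumption|]. apply Rmult_le_compat; lra. }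
  exists J. split; [unfold J, N; lia|].
  intros i Hi. replace i with (J + (i - J))%nat at 1 by lia.
  pose proof (Hk (i - J)%nat). pose proof (Hc' (J + (i - J))%nat). nra.
Qed.
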